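(* Let $i\ge1$, $i+1\le k\le 2^i$, and let $f:[k-1]\to\mathcal{P}([i])\setminus\{\emptyset\}$ be an $(i,k)$-prototype. Suppose there exist $n\ge1$ and a partition $\pi=\{P_1,\dots,P_k\}$ of $[n+1]$ into $k$ nonempty blocks such that the set of hyperplanes $\{H_{A_1},\dots,H_{A_i}\}$, where $(A_1,\dots,A_i)=A_{f,\pi}$, is a broken circuit of $\mathcal{A}_n$ with respect to the binary order. Then for every $\tilde n\ge1$ and every partition $\tilde\pi=\{\tilde P_1,\dots,\tilde P_k\}$ of $[\tilde n+1]$ into $k$ nonempty blocks, the set $\{H_{\tilde A_1},\dots,H_{\tilde A_i}\}$ with $(\tilde A_1,\dots,\tilde A_i)=A_{f,\tilde\pi}$ is a broken circuit of $\mathcal{A}_{\tilde n}$ with respect to the binary order.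
   Context: For $n\ge1$, $\mathcal{A}_n$ is the resonance arrangement in $\mathbb{R}^n$ of hyperplanes $H_I=\{x:\sum_{i\in I}x_i=0\}$, $\emptyset\ne I\subseteq[n]$. Binary order: a subset $I$ of a set of positive integers is encoded as $\sum_{j\in I}2^j$, and subsets (and hyperplanes $H_I$) are linearly ordered by this number. A circuit of an arrangement is a minimally linearly dependent set of hyperplanes (i.e. of their normal vectors); a broken circuit is $C\setminus\{H\}$ where $C$ is a circuit and $H$ its largest element in the fixed order. An $(i,k)$-prototype is an injective map $f:[k-1]\to\mathcal{P}([i])\setminus\{\emptyset\}$; its building blocks are $I^f_j=\{\ell\in[k-1]: j\in f(\ell)\}$ for $1\le j\le i$. Given a partition $\pi$ of $[n+1]$ into $k$ blocks, the blocks are labeled $P_1,\dots,P_k$ increasingly in the binary order (so $n+1\in P_k$), and $A_{f,\pi}=(A_1,\dots,A_i)$ with $A_j=\bigcup_{\ell\in I^f_j}P_\ell\subseteq[n]$. *)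

(* Defs.v *)
From HB Require Import structures.
From mathcomp Require Import all_boot all_order all_algebra.
From mathcomp Require Import reals.
Set Implicit Arguments. Unset Strict Implicit. Unset Printing Implicit Defensive.
Import Order.TTheory GRing.Theory Num.Theory.

(* Encoding: the ground set [m] = {1,...,m} is represented by 'I_m, the
   ordinal x standing for the integer x.+1. *)

Definition bincode (m : nat) (I : {set 'I_m}) : nat := \sum_(x in I) 2 ^ x.+1.

(* Normal vector of the hyperplane H_I = {x : sum_{i in I} x_i = 0} in R^n. *)
Definition nvec (R : realType) (n : nat) (I : {set 'I_n}) : 'rV[R]_n :=
  \row_(x < n) (if x \in I then 1%R else 0%R).

(* The hyperplanes of the resonance arrangement A_n: indexed by the nonempty
   subsets I of [n] (I |-> H_I is injective on nonempty subsets). *)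
Definition resonance_hyps (n : nat) : {set {set 'I_n}} := [set I | I != set0].

Definition hyp_free (R : realType) (n : nat) (S : {set {set 'I_n}}) : bool :=
  free [seq nvec R J | J <- enum S].

Definition is_circuit (R : realType) (n : nat) (C : {set {set 'I_n}}) : Prop :=
  [/\ C \subset resonance_hyps n, ~~ hyp_free R C &
      forall D : {set {set 'I_n}}, D \proper C -> hyp_free R D].

Definition is_broken_circuit (R : realType) (n : nat) (S : {set {set 'I_n}}) : Prop :=
  exists C : {set {set 'I_n}}, exists2 H, H \in C &
    [/\ is_circuit R C, (forall H', H' \in C -> bincode H' <= bincode H)%N &
        S = C :\ H].

Definition prototype (i k : nat) (f : 'I_k.-1 -> {set 'I_i}) : Prop :=
  injective f /\ forall l, f l != set0.

Definition building_block (i k : nat) (f : 'I_k.-1 -> {set 'I_i}) (j : 'I_i)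
  : {set 'I_k.-1} := [set l | j \in f l].

Definition is_k_partition (m k : nat) (P : {set {set 'I_m}}) : Prop :=
  partition P [set: 'I_m] /\ #|P| = k.

(* The block with (0-based) rank l in P for the binary order, i.e. the block
   P_(l+1) in the paper's labelling P_1,...,P_k. *)
Definition block_of (m : nat) (P : {set {set 'I_m}}) (l : nat) : {set 'I_m} :=
  odflt set0 [pick B in P | #|[set C in P | bincode C < bincode B]| == l].

Definition Aj (i k n : nat) (f : 'I_k.-1 -> {set 'I_i})
  (P : {set {set 'I_n.+1}}) (j : 'I_i) : {set 'I_n.+1} :=
  \bigcup_(l in building_block f j) block_of P l.

(* View a subset of [n+1] not containing n+1 as a subset of [n]. *)
Definition to_sub_n (n : nat) (A : {set 'I_n.+1}) : {set 'I_n} :=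
  [set x : 'I_n | widen_ord (leqnSn n) x \in A].

Definition A_hyps (i k n : nat) (f : 'I_k.-1 -> {set 'I_i})
  (P : {set {set 'I_n.+1}}) : {set {set 'I_n}} :=
  [set to_sub_n (Aj f P j) | j : 'I_i].

(* Main.v *)
Require Import Defs.
From HB Require Import structures.
From mathcomp Require Import all_boot all_order all_algebra.
From mathcomp Require Import reals.
From mathcomp Require Import zify.
Set Implicit Arguments. Unset Strict Implicit. Unset Printing Implicit Defensive.
Import GRing.Theory.

Definition superinc (w : nat -> nat) (m : nat) :=
  forall l, l < m -> \sum_(0 <= l' < m | l' < l) w l' < w l.

Lemma sum_lt_cut (F : nat -> nat) m l : l <= m ->
  \sum_(0 <= l' < m | l' < l) F l' = \sum_(0 <= l' < l) F l'.
Proof.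
move=> Hlm; rewrite (@big_cat_nat _ _ _ l 0 m _ _ (leq0n l) Hlm) /=.
rewrite [X in _ + X]big_nat_cond [X in _ + X]big1 ?addn0; last first.
  by move=> j /andP[/andP[Hj _] Hj']; rewrite ltnNge Hj in Hj'.
rewrite big_nat_cond [RHS]big_nat_cond; apply: eq_bigl => j.
by case: (ltnP j l); rewrite ?andbT ?andbF.
Qed.

Lemma superinc_rec w m : superinc w m.+1 -> superinc w m /\ \sum_(0 <= l < m) w l < w m.
Proof.
move=> H; split.
  move=> l Hl; have := H l (ltnW Hl).
  by rewrite !sum_lt_cut // ltnW // ltnW.
by have := H m (ltnSn m); rewrite sum_lt_cut.
Qed.

Lemma sum_cond_le (w : nat -> nat) m (p : pred nat) :
  \sum_(0 <= l < m | p l) w l <= \sum_(0 <= l < m) w l.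
Proof. by rewrite big_mkcond /=; apply: leq_sum => l _; case: (p l). Qed.

Lemma sum_recr_cond (w : nat -> nat) m (p : pred nat) :
  \sum_(0 <= l < m.+1 | p l) w l = \sum_(0 <= l < m | p l) w l + (if p m then w m else 0).
Proof. by rewrite big_mkcond big_nat_recr //= -big_mkcond. Qed.

Lemma si_cmp w w' m (p q : pred nat) : superinc w m -> superinc w' m ->
  (\sum_(0 <= l < m | p l) w l <= \sum_(0 <= l < m | q l) w l) =
  (\sum_(0 <= l < m | p l) w' l <= \sum_(0 <= l < m | q l) w' l).
Proof.
elim: m => [|m IH] Hw Hw'; first by rewrite !big_geq.
have [Hw1 Hwm] := superinc_rec Hw; have [Hw1' Hwm'] := superinc_rec Hw'.
have IH' := IH Hw1 Hw1'.
have ha := sum_cond_le w m p; have hb := sum_cond_le w m q.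
have ha' := sum_cond_le w' m p; have hb' := sum_cond_le w' m q.
rewrite !sum_recr_cond.
move: IH' ha hb ha' hb'.
set a := \sum_(0 <= l < m | p l) w l; set b := \sum_(0 <= l < m | q l) w l.
set a' := \sum_(0 <= l < m | p l) w' l; set b' := \sum_(0 <= l < m | q l) w' l.
move=> IH' ha hb ha' hb'.
have [hab|hab] := leqP a b.
  have hab' : a' <= b' by rewrite -IH'.
  by case: (p m); case: (q m) => /=; apply/idP/idP => ?; lia.
have hab' : b' < a' by rewrite ltnNge -IH' -ltnNge.
by case: (p m); case: (q m) => /=; apply/idP/idP => ?; lia.
Qed.

Lemma si_inj w m (p q : pred nat) : superinc w m ->
  \sum_(0 <= l < m | p l) w l = \sum_(0 <= l < m | q l) w l ->
  forall l, l < m -> p l = q l.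
Proof.
elim: m => [|m IH] Hw //.
have [Hw1 Hwm] := superinc_rec Hw.
have ha := sum_cond_le w m p; have hb := sum_cond_le w m q.
rewrite !sum_recr_cond => Heq0.
have hpq : p m = q m.
  by move: ha hb Heq0; case: (p m); case: (q m) => //= ha hb Heq; lia.
move: Heq0; rewrite hpq => /eqP; rewrite eqn_add2r => /eqP Heq l.
rewrite ltnS leq_eqVlt => /orP[/eqP -> //|]; exact: IH.
Qed.

Lemma geo_sum t : \sum_(0 <= l < t) 2 ^ l.+1 + 2 = 2 ^ t.+1.
Proof.
elim: t => [|t IH]; first by rewrite big_geq.
rewrite big_nat_recr //= (expnS 2 t.+1); move: IH.
move: (\sum_(0 <= l < t) 2 ^ l.+1) (2 ^ t.+1) => a b; lia.
Qed.

Lemma geo_superinc m : superinc (fun x => 2 ^ x.+1) m.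
Proof.
move=> l Hl; rewrite sum_lt_cut; last exact: ltnW.
rewrite -geo_sum.
move: (\sum_(0 <= l' < l) 2 ^ l'.+1) => a; lia.
Qed.

Definition natp m (A : {set 'I_m}) : pred nat :=
  fun x => x \in [seq val y | y <- enum A].

Lemma natpE m (A : {set 'I_m}) x (hx : x < m) : natp A x = (Ordinal hx \in A).
Proof.
rewrite /natp; apply/mapP/idP => [[y Hy Hxy]|H].
  subst x; rewrite mem_enum in Hy; suff -> : Ordinal hx = y by [].
  exact: val_inj.
by exists (Ordinal hx); rewrite ?mem_enum.
Qed.

Lemma natpP m (A : {set 'I_m}) x : natp A x -> exists2 y, y \in A & x = val y.
Proof. by move/mapP=> [y Hy ->]; exists y => //; rewrite mem_enum in Hy. Qed.

Lemma sum_natp m (A : {set 'I_m}) (F : nat -> nat) :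
  \sum_(x in A) F (val x) = \sum_(0 <= x < m | natp A x) F x.
Proof.
rewrite big_mkord; apply: eq_bigl => x.
by rewrite /natp (mem_map val_inj) mem_enum.
Qed.

Lemma bincodeE m (A : {set 'I_m}) : bincode A = \sum_(0 <= x < m | natp A x) 2 ^ x.+1.
Proof. exact: (sum_natp A (fun x => 2 ^ x.+1)). Qed.

Lemma bincode_inj m : injective (@bincode m).
Proof.
move=> A B; rewrite !bincodeE => /(si_inj (@geo_superinc m)) H.
apply/setP => x; have := H x (ltn_ord x).
rewrite !(natpE _ (ltn_ord x)).
by have -> : Ordinal (ltn_ord x) = x by apply: val_inj.
Qed.

Lemma si_lt_top w m (p : pred nat) t : superinc w m -> t < m ->
  (forall l, p l -> l < t) -> \sum_(0 <= l < m | p l) w l < w t.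
Proof.
move=> Hw Ht Hp; apply: leq_ltn_trans (Hw t Ht).
rewrite big_mkcond [X in _ <= X]big_mkcond /=; apply: leq_sum => l _.
by case: ifP => // /Hp ->.
Qed.

Lemma bincode_lt m (A : {set 'I_m}) t : t < m ->
  (forall x, x \in A -> x < t) -> bincode A < 2 ^ t.+1.
Proof.
move=> Ht HA; rewrite bincodeE; apply: (si_lt_top (@geo_superinc m) Ht).
by move=> l /natpP [y Hy ->]; exact: HA.
Qed.

Lemma bincode_ge m (A : {set 'I_m}) y : y \in A -> 2 ^ y.+1 <= bincode A.
Proof. by move=> Hy; rewrite /bincode (bigD1 y) //= leq_addr. Qed.

Open Scope ring_scope.

Definition rmul (R : realType) m n (M : 'M[R]_(m, n)) (x : 'rV[R]_m) : 'rV[R]_n := x *m M.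

Lemma span_mul (R : realType) m n (M : 'M[R]_(m, n)) (Y : seq 'rV[R]_m) v :
  v \in <<map (rmul M) Y>>%VS -> exists2 u, u \in <<Y>>%VS & v = u *m M.
Proof.
move=> Hv; have := @coord_span _ _ _ (in_tuple (map (rmul M) Y)) v Hv.
set c := coord _; move=> ->.
exists (\sum_(i < size (map (rmul M) Y)) c i v *: Y`_i).
  by apply: memv_suml => i _; rewrite memvZ // memv_span // mem_nth // -(size_map (rmul M)).
rewrite mulmx_suml; apply: eq_bigr => i _; rewrite -scalemxAl (nth_map 0) //=.
by rewrite -(size_map (rmul M)).
Qed.

Lemma span_mul2 (R : realType) m n (M : 'M[R]_(m, n)) (Y : seq 'rV[R]_m) u :
  u \in <<Y>>%VS -> u *m M \in <<map (rmul M) Y>>%VS.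
Proof.
move=> Hu; rewrite (@coord_span _ _ _ (in_tuple Y) u Hu) mulmx_suml.
apply: memv_suml => i _; rewrite -scalemxAl memvZ // memv_span //.
by apply: (map_f (rmul M)); apply: mem_nth.
Qed.

Lemma free_mul (R : realType) m n (M : 'M[R]_(m, n)) (Y : seq 'rV[R]_m) :
  injective (rmul M) -> free (map (rmul M) Y) = free Y.
Proof.
move=> inj; elim: Y => [|v Y IH] /=; first by rewrite !nil_free.
rewrite !free_cons IH; congr (~~ _ && _); apply/idP/idP => [H|H].
  by have [u Hu /inj ->] := span_mul H.
exact: span_mul2.
Qed.

Lemma enum_imset_perm (T U : finType) (g : T -> U) (A : {set T}) :
  injective g -> perm_eq (enum (g @: A)) (map g (enum A)).
Proof.
move=> ig; apply: uniq_perm; first exact: enum_uniq.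
  by rewrite map_inj_uniq ?enum_uniq.
move=> y; rewrite mem_enum; apply/imsetP/mapP => [[x xA ->]|[x xA ->]];
  exists x => //; by rewrite ?mem_enum in xA *.
Qed.

Lemma enum_D1_perm (T : finType) (C : {set T}) H :
  H \in C -> perm_eq (enum C) (H :: enum (C :\ H)).
Proof.
move=> HC; apply: uniq_perm; first exact: enum_uniq.
  by rewrite /= mem_enum !inE eqxx enum_uniq.
by move=> y; rewrite in_cons !mem_enum !inE; case: eqP => // ->.
Qed.

Lemma imsetD1_inj (T U : finType) (g : T -> U) (A : {set T}) a :
  injective g -> g @: (A :\ a) = g @: A :\ g a.
Proof.
move=> ig; apply/setP=> y; rewrite [in RHS]inE.
apply/imsetP/andP => [[x /setD1P[xa xA] ->]|[ya /imsetP[x xA Hx]]].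
  by split; [rewrite inE (inj_eq ig) | apply: imset_f].
exists x => //; rewrite !inE xA andbT; apply: contraNneq ya => Hxa.
by rewrite Hx Hxa inE.
Qed.

Lemma nvec_inj (R : realType) n : injective (@nvec R n).
Proof.
move=> A B /rowP H; apply/setP => x; have := H x; rewrite !mxE.
by case: (x \in A); case: (x \in B) => // /eqP; rewrite ?oner_eq0 // eq_sym oner_eq0.
Qed.

Lemma nvec0 (R : realType) n : nvec R (set0 : {set 'I_n}) = 0.
Proof. by apply/rowP => x; rewrite !mxE inE. Qed.


Lemma abstract_bc (R : realType) m n (Phi : {set 'I_m} -> {set 'I_n}) (M : 'M[R]_(m, n)) :
  (forall L, nvec R (Phi L) = nvec R L *m M) -> injective (rmul M) ->
  (forall H u, nvec R H = u *m M -> exists L, H = Phi L) ->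
  (forall L L', (bincode (Phi L) <= bincode (Phi L'))%N = (bincode L <= bincode L')%N) ->
  forall S' : {set {set 'I_m}}, is_broken_circuit R (Phi @: S') <-> is_broken_circuit R S'.
Proof.
move=> Hnv Hinj Hsurj Hord S'.
have Pinj : injective Phi.
  by move=> L L' E; apply: (@nvec_inj R); apply: Hinj; rewrite /rmul -!Hnv E.
have P0 L : (Phi L == set0) = (L == set0).
  apply/eqP/eqP => [E|->].
    apply: (@nvec_inj R); apply: Hinj; rewrite /rmul -Hnv E !nvec0 mul0mx //.
  by apply: (@nvec_inj R); rewrite Hnv !nvec0 mul0mx.
have Pfree (D : {set {set 'I_m}}) : hyp_free R (Phi @: D) = hyp_free R D.
  rewrite /hyp_free (perm_free (perm_map _ (enum_imset_perm D Pinj))).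
  rewrite -map_comp (@eq_map _ _ (@nvec R n \o Phi) (rmul M \o @nvec R m) Hnv) map_comp.
  exact: free_mul.
split.
  move=> [C [H HH [[Cres Cnf Cmin] Hmax HS]]].
  have Sfree : hyp_free R (C :\ H) := Cmin _ (properD1 HH).
  have Hspan : nvec R H \in <<map (@nvec R n) (enum (C :\ H))>>%VS.
    move: Cnf; rewrite /hyp_free (perm_free (perm_map _ (enum_D1_perm HH))) /=.
    by rewrite free_cons -/(hyp_free R (C :\ H)) Sfree andbT negbK.
  have [H0 EH0] : exists H0, H = Phi H0.
    move: Hspan; rewrite -HS.
    rewrite (eq_span (perm_mem (perm_map _ (enum_imset_perm S' Pinj)))).
    rewrite -map_comp (@eq_map _ _ (@nvec R n \o Phi) (rmul M \o @nvec R m) Hnv) map_comp.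
    by move=> /span_mul [u _ Hu]; apply: (Hsurj H u).
  have inC y : y \in C -> exists L, y = Phi L.
    move=> yC; case: (eqVneq y H) => [->|yH]; first by exists H0.
    have : y \in C :\ H by rewrite !inE yH.
    by rewrite -HS => /imsetP [L _ ->]; exists L.
  pose C' := [set L | Phi L \in C].
  have EC : Phi @: C' = C.
    apply/setP => y; apply/imsetP/idP => [[L]|yC]; first by rewrite inE => ? ->.
    by have [L EL] := inC y yC; exists L; rewrite // inE -EL.
  exists C'; exists H0; first by rewrite inE -EH0.
  split.
  - split.
    + apply/subsetP => L; rewrite !inE => /(subsetP Cres); rewrite inE.
      by rewrite P0.
    + by rewrite -Pfree EC.
    + move=> D HD; rewrite -Pfree; apply: Cmin; rewrite -EC.
      rewrite properE imsetS ?(proper_sub HD) //=.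
      apply/negP => /subsetP sub; move: HD; rewrite properE => /andP[_ /negP]; apply.
      apply/subsetP => L LC'.
      have /imsetP [L' L'D EL] := sub _ (imset_f Phi LC').
      by rewrite (Pinj _ _ EL).
  - move=> L; rewrite inE -Hord -EH0; exact: Hmax.
  - apply: (imset_inj Pinj); rewrite HS imsetD1_inj // EC EH0 //.
move=> [C' [H' HH' [[Cres Cnf Cmin] Hmax HS]]].
exists (Phi @: C'); exists (Phi H'); first exact: imset_f.
split.
- split.
  + apply/subsetP => _ /imsetP [L HL ->]; rewrite inE P0.
    by have := subsetP Cres L HL; rewrite inE.
  + by rewrite Pfree.
  + move=> D HD.
    pose D' := [set L in C' | Phi L \in D].
    have ED : D = Phi @: D'.
      apply/setP => y; apply/idP/imsetP => [yD|[L]]; last by rewrite inE => /andP[_ ?] ->.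
      have /imsetP [L LC EL] := subsetP (proper_sub HD) y yD.
      by exists L => //; rewrite inE LC -EL yD.
    rewrite ED Pfree; apply: Cmin; rewrite properE.
    apply/andP; split; first by apply/subsetP => L; rewrite inE => /andP[].
    apply/negP => sub; move: HD; rewrite properE => /andP[_ /negP]; apply; rewrite ED.
    exact: imsetS.
- move=> _ /imsetP [L HL ->]; rewrite Hord; exact: Hmax.
- by rewrite HS imsetD1_inj.
Qed.

Close Scope ring_scope.

Definition rank M (P : {set {set 'I_M}}) (B : {set 'I_M}) :=
  #|[set C in P | bincode C < bincode B]|.

Lemma rank_lt M (P : {set {set 'I_M}}) B : B \in P -> rank P B < #|P|.
Proof.
move=> BP; rewrite (cardsD1 B P) BP add1n ltnS /rank; apply: subset_leq_card.
apply/subsetP => C; rewrite !inE => /andP[CP lt]; rewrite CP andbT.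
by apply: contraTneq lt => ->; rewrite ltnn.
Qed.

Lemma rank_mono M (P : {set {set 'I_M}}) B B' :
  bincode B <= bincode B' -> rank P B <= rank P B'.
Proof.
move=> le; apply: subset_leq_card; apply/subsetP => C; rewrite !inE.
by move=> /andP[-> lt]; apply: leq_trans le.
Qed.

Lemma rank_strict M (P : {set {set 'I_M}}) B B' :
  B \in P -> bincode B < bincode B' -> rank P B < rank P B'.
Proof.
move=> BP lt; rewrite /rank (cardsD1 B [set C in P | bincode C < bincode B']).
rewrite inE BP lt add1n ltnS; apply: subset_leq_card; apply/subsetP => C.
rewrite !inE => /andP[CP ltC]; rewrite CP (ltn_trans ltC lt) !andbT.
by apply: contraTneq ltC => ->; rewrite ltnn.
Qed.

Lemma rank_exists M (P : {set {set 'I_M}}) l : l < #|P| ->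
  exists2 B, B \in P & rank P B = l.
Proof.
move=> Hl; pose s := [seq rank P B | B <- enum P].
have us : uniq s.
  rewrite map_inj_in_uniq ?enum_uniq // => B B'; rewrite !mem_enum => BP B'P E.
  apply: bincode_inj; case: (ltngtP (bincode B) (bincode B')) => // lt.
    by have := rank_strict BP lt; rewrite E ltnn.
  by have := rank_strict B'P lt; rewrite E ltnn.
have sub : {subset s <= iota 0 #|P|}.
  move=> x /mapP [B BP ->]; rewrite mem_iota add0n /=; apply: rank_lt.
  by rewrite mem_enum in BP.
have sz : size (iota 0 #|P|) <= size s by rewrite size_iota size_map cardE.
have [_ E] := uniq_min_size us sub sz.
have : l \in s by rewrite E mem_iota add0n.
by move/mapP => [B BP ->]; exists B => //; rewrite mem_enum in BP.
Qed.

Lemma block_ofP M (P : {set {set 'I_M}}) l : l < #|P| ->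
  block_of P l \in P /\ rank P (block_of P l) = l.
Proof.
move=> Hl; rewrite /block_of; case: pickP => [B /andP[BP /eqP Hr] | H] //=.
have [B BP Hr] := rank_exists Hl.
by have := H B; rewrite BP /= /rank in Hr *; rewrite Hr eqxx.
Qed.

Lemma PTI M (P : {set {set 'I_M}}) A B x : trivIset P -> A \in P -> B \in P ->
  x \in A -> x \in B -> A = B.
Proof.
move=> /trivIsetP tP AP BP xA xB; apply/eqP; apply/negPn/negP => nAB.
by have := disjointFr (tP A B AP BP nAB) xA; rewrite xB.
Qed.

Lemma max_elt M (B : {set 'I_M}) : B != set0 ->
  exists2 t, t \in B & forall x, x \in B -> x <= t.
Proof.
move=> /set0Pn [x0 x0B].
case: (arg_maxnP (fun x : 'I_M => val x) x0B) => t tB tmax.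
by exists t.
Qed.

Lemma DL M (C B : {set 'I_M}) t y : (forall x, x \in C -> x \in B -> False) ->
  t \in B -> (forall x, x \in B -> x <= t) -> bincode C < bincode B ->
  y \in C -> y < t.
Proof.
move=> dis tB tmax lt yC; rewrite ltnNge; apply/negP => hty.
have ht : t < y.
  rewrite ltn_neqAle hty andbT; apply/negP => /eqP E.
  have E' : t = y by apply: val_inj.
  by apply: (dis y yC); rewrite -E'.
have h1 : bincode B < 2 ^ y.+1.
  apply: bincode_lt => // x xB; exact: leq_ltn_trans (tmax x xB) ht.
have h2 := bincode_ge yC.
lia.
Qed.

Lemma ltn_max n (x : 'I_n.+1) : x != ord_max -> x < n.
Proof.
move=> Hx; rewrite ltn_neqAle -ltnS ltn_ord andbT.
by apply: contraNneq Hx => E; apply/eqP; apply: val_inj.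
Qed.


Lemma bincode_sub n (X : {set 'I_n.+1}) : ord_max \notin X ->
  bincode (to_sub_n X) = bincode X.
Proof.
move=> HX; rewrite /bincode [RHS]big_mkcond big_ord_recr /= (negbTE HX) addn0.
rewrite big_mkcond /=; apply: eq_bigr => x _; by rewrite inE.
Qed.

Lemma BU M m (L : {set 'I_m}) (F : 'I_m -> {set 'I_M}) :
  (forall l l' x, l \in L -> l' \in L -> x \in F l -> x \in F l' -> l = l') ->
  bincode (\bigcup_(l in L) F l) = \sum_(l in L) bincode (F l).
Proof.
move=> H; rewrite /bincode.
under [RHS]eq_bigr do rewrite big_mkcond.
rewrite exchange_big big_mkcond /=; apply: eq_bigr => x _.
case: (boolP (x \in \bigcup_(l in L) F l)) => [/bigcupP [l lL xl]|nU].
  rewrite (bigD1 l) //= xl big1 ?addn0 // => l' /andP[l'L nl'].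
  case: ifP => // xl'; by have := H _ _ _ l'L lL xl' xl; move/eqP: nl'.
rewrite big1 // => l lL; case: ifP => // xl; exfalso; apply: (negP nU).
by apply/bigcupP; exists l.
Qed.

Definition Phi n (P : {set {set 'I_n.+1}}) m (L : {set 'I_m}) : {set 'I_n} :=
  to_sub_n (\bigcup_(l in L) block_of P l).

Definition Mat (R : realType) n (P : {set {set 'I_n.+1}}) m : 'M[R]_(m, n) :=
  \matrix_(l < m, x < n) (if widen_ord (leqnSn n) x \in block_of P l then 1%R else 0%R).

Lemma PhiP n (P : {set {set 'I_n.+1}}) m (L : {set 'I_m}) x :
  reflect (exists2 l, l \in L & widen_ord (leqnSn n) x \in block_of P l) (x \in Phi P L).
Proof. rewrite /Phi /to_sub_n inE; exact: (iffP bigcupP). Qed.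

Lemma blk_lemmas n k (P : {set {set 'I_n.+1}}) : is_k_partition k P ->
  [/\ (forall l, l < k -> block_of P l \in P /\ rank P (block_of P l) = l),
      (forall l l' x, l < k -> l' < k -> x \in block_of P l -> x \in block_of P l' -> l = l'),
      (forall l' l, l' < l -> l < k -> bincode (block_of P l') < bincode (block_of P l)),
      (forall l, l < k.-1 -> ord_max \notin block_of P l) &
      (forall l, l < k.-1 -> exists x : 'I_n, widen_ord (leqnSn n) x \in block_of P l)].
Proof.
move=> [/and3P[_ tP P0] cardP].
have B1 l : l < k -> block_of P l \in P /\ rank P (block_of P l) = l.
  by move=> Hl; apply: block_ofP; rewrite cardP.
have B3 l l' x : l < k -> l' < k -> x \in block_of P l -> x \in block_of P l' -> l = l'.
  move=> Hl Hl' xl xl'; have [bl rl] := B1 l Hl; have [bl' rl'] := B1 l' Hl'.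
  by rewrite -rl -rl' (PTI tP bl bl' xl xl').
have B4 l' l : l' < l -> l < k -> bincode (block_of P l') < bincode (block_of P l).
  move=> Hl' Hl; rewrite ltnNge; apply/negP => /(rank_mono P).
  rewrite (B1 l Hl).2 (B1 l' (ltn_trans Hl' Hl)).2; lia.
have B5 l : l < k.-1 -> ord_max \notin block_of P l.
  move=> Hl; have Hlk : l < k by lia.
  have [bl rl] := B1 l Hlk.
  apply/negP => Hmax.
  have : #|P :\ block_of P l| <= rank P (block_of P l).
    apply: subset_leq_card; apply/subsetP => C; rewrite !inE => /andP[nC CP].
    rewrite CP /=; apply: leq_trans (bincode_ge Hmax) => /=.
    apply: (@bincode_lt _ _ n (ltnSn n)) => x xC; apply: ltn_max.
    apply: contraNneq nC => E; rewrite E in xC.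
    apply/eqP; exact: (PTI tP CP bl xC Hmax).
  have := cardsD1 (block_of P l) P; rewrite bl cardP rl add1n; move: (#|P :\ block_of P l|) => c; lia.
split => // l Hl.
have Hlk : l < k by lia.
have [bl _] := B1 l Hlk.
have : block_of P l != set0 by apply: contraNneq P0 => <-.
move=> /set0Pn [y yl].
have ny : y != ord_max by apply: contraTneq yl => ->; exact: B5.
exists (Ordinal (ltn_max ny)).
by have -> : widen_ord (leqnSn n) (Ordinal (ltn_max ny)) = y by apply: val_inj.
Qed.

Lemma main_equiv (R : realType) n k (P : {set {set 'I_n.+1}})
    (S' : {set {set 'I_k.-1}}) :
  is_k_partition k P ->
  is_broken_circuit R (@Phi n P k.-1 @: S') <-> is_broken_circuit R S'.
Proof.
move=> HP; have [B1 B3 B4 B5 B6] := blk_lemmas HP.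
have ltk (l : 'I_k.-1) : l < k by apply: leq_trans (ltn_ord l) (leq_pred k).
pose M := Mat R P k.-1.
have ME1 (u : 'rV[R]_k.-1) x (l : 'I_k.-1) :
    widen_ord (leqnSn n) x \in block_of P l -> (u *m M)%R ord0 x = u ord0 l.
  move=> xl; rewrite !mxE (bigD1 l) //= mxE xl GRing.mulr1 big1 ?GRing.addr0 //.
  move=> l' nl'; rewrite mxE; case: ifP => xl'; last by rewrite GRing.mulr0.
  by have := B3 _ _ _ (ltk l') (ltk l) xl' xl => /val_inj E; rewrite E eqxx in nl'.
have ME0 (u : 'rV[R]_k.-1) x : (forall l : 'I_k.-1, widen_ord (leqnSn n) x \notin block_of P l) ->
    (u *m M)%R ord0 x = 0%R.
  move=> H; rewrite !mxE big1 // => l _; rewrite mxE (negbTE (H l)) GRing.mulr0 //.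
have Ha L : nvec R (Phi P L) = (nvec R L *m M)%R.
  apply/rowP => x; rewrite [LHS]mxE.
  case: (boolP [exists l : 'I_k.-1, widen_ord (leqnSn n) x \in block_of P l]) =>
    [/existsP [l xl] | /existsPn H].
    rewrite (ME1 _ _ _ xl) mxE; congr (if _ then _ else _).
    apply/PhiP/idP => [[l' l'L xl']|lL]; last by exists l.
    by have := B3 _ _ _ (ltk l') (ltk l) xl' xl => /val_inj <-.
  rewrite ME0 //; case: PhiP => // [[l _ xl]]; by have := H l; rewrite xl.
have Hb : injective (rmul M).
  move=> u v E; apply/rowP => l; have [x xl] := B6 l (ltn_ord l).
  by rewrite -(ME1 u _ _ xl) -(ME1 v _ _ xl); move: E; rewrite /rmul => ->.
have Hc H u : nvec R H = (u *m M)%R -> exists L : {set 'I_k.-1}, H = Phi P L.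
  move=> EH; exists [set l | u ord0 l == 1%R].
  apply: (@nvec_inj R); rewrite Ha EH; congr (_ *m _)%R.
  apply/rowP => l; have [x xl] := B6 l (ltn_ord l).
  have := ME1 u _ _ xl; rewrite -EH !mxE inE.
  by case: (x \in H) => <-; rewrite ?eqxx // eq_sym GRing.oner_eq0.
apply: (abstract_bc Ha Hb Hc).
have bPhi (L : {set 'I_k.-1}) : bincode (Phi P L) = \sum_(l in L) bincode (block_of P l).
  rewrite /Phi bincode_sub; last first.
    by apply/bigcupP => [[l _ lmax]]; have := B5 l (ltn_ord l); rewrite lmax.
  apply: BU => l l' x _ _ xl xl'; apply: val_inj; exact: B3 (ltk l) (ltk l') xl xl'.
pose w l := bincode (block_of P l).
have wsi : superinc w k.-1.
  move=> l Hl; rewrite big_mkord.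
  have bl : block_of P l != set0.
    by have [x xl] := B6 l Hl; apply/set0Pn; exists (widen_ord (leqnSn n) x).
  have [t tB tmax] := max_elt bl.
  apply: (@leq_trans (2 ^ t.+1)); last exact: bincode_ge.
  have -> : \sum_(l' < k.-1 | l' < l) w l' = bincode (\bigcup_(l' in [set l' : 'I_k.-1 | l' < l]) block_of P l').
    rewrite BU; last first.
      move=> l1 l2 x _ _ x1 x2; apply: val_inj; exact: B3 (ltk l1) (ltk l2) x1 x2.
    by apply: eq_bigl => l'; rewrite inE.
  apply: bincode_lt => // y /bigcupP [l' l'l yl'].
  rewrite inE in l'l.
  have Hlk : l < k by apply: leq_trans Hl (leq_pred k).
  apply: (DL _ tB tmax (B4 _ _ l'l Hlk) yl').
  move=> x x1 x2; have := B3 _ _ _ (ltk l') Hlk x1 x2; move=> E; rewrite E ltnn in l'l.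
  done.
move=> L L'; rewrite !bPhi !bincodeE.
rewrite (sum_natp L w) (sum_natp L' w).
exact: si_cmp wsi (@geo_superinc k.-1).
Qed.

Theorem proposition5p1 (R : realType) (i k : nat) (f : 'I_k.-1 -> {set 'I_i}) :
  (1 <= i)%N -> (i.+1 <= k <= 2 ^ i)%N -> prototype f ->
  (exists n : nat, exists P : {set {set 'I_n.+1}},
     [/\ (1 <= n)%N, is_k_partition k P & is_broken_circuit R (A_hyps f P)]) ->
  forall (nt : nat) (Pt : {set {set 'I_nt.+1}}),
    (1 <= nt)%N -> is_k_partition k Pt -> is_broken_circuit R (A_hyps f Pt).
Proof.
move=> _ _ _ [n [P [_ HP HB]]] nt Pt _ HPt.
have EA nn (PP : {set {set 'I_nn.+1}}) :
    A_hyps f PP = @Phi nn PP k.-1 @: [set building_block f j | j : 'I_i].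
  by rewrite /A_hyps -imset_comp.
move: HB; rewrite !EA => /(@main_equiv R n k P _ HP) HB.
exact/(@main_equiv R nt k Pt _ HPt).
Qed.
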